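(* Let $\mathcal{H}$ be finite-dimensional with Hamiltonian $H$, $\mathcal{C}=\{P_i\}$ nonzero mutually orthogonal projectors summing to $I$, $V_i=\mathrm{tr}[P_i]$, $\rho$ a density operator, $p_i=\mathrm{tr}[P_i\rho]$, $\rho_{\mathrm{cg}}=\sum_i\frac{p_i}{V_i}P_i$. Define $$W_{\mathcal{C}}^B(\rho)=\mathrm{tr}[H\rho]-\sum_ip_i\min_U\mathrm{tr}[HU(P_i/V_i)U^\dagger],\qquad W_{\mathcal{C}}(\rho)=\mathrm{tr}[H\rho]-\min_U\mathrm{tr}[HU\rho_{\mathrm{cg}}U^\dagger],$$ and, assuming there exist $\beta,\beta'\in(0,\infty)$ with $S_{\mathrm{vN}}(\rho_\beta)=\sum_ip_i\ln V_i$ and $S_{\mathrm{vN}}(\rho_{\beta'})=-\sum_ip_i\ln p_i+\sum_ip_i\ln V_i$ (where $\rho_\gamma=e^{-\gamma H}/\mathrm{tr}[e^{-\gamma H}]$), define $W_{\mathcal{C}}^{B\infty}(\rho)=\mathrm{tr}[H(\rho-\rho_\beta)]$ and $W_{\mathcal{C}}^{\infty}(\rho)=\mathrm{tr}[H(\rho-\rho_{\beta'})]$. Then $$W_{\mathcal{C}}(\rho)\le W^B_{\mathcal{C}}(\rho)\le W^{B\infty}_{\mathcal{C}}(\rho)\quad\text{and}\quad W_{\mathcal{C}}(\rho)\le W^{\infty}_{\mathcal{C}}(\rho)\le W^{B\infty}_{\mathcal{C}}(\rho).$$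
   Context: Minima are over unitaries $U$ on $\mathcal{H}$; $S_{\mathrm{vN}}(\sigma)=-\mathrm{tr}[\sigma\ln\sigma]$ with $0\ln0=0$. $W^B_{\mathcal{C}}$ is called the Boltzmann ergotropy, $W_{\mathcal{C}}$ the observational ergotropy, and $W^{B\infty}_{\mathcal{C}}$, $W^{\infty}_{\mathcal{C}}$ their large-$N$ versions. *)

(* Defs.v *)
From mathcomp Require Import all_boot all_order all_algebra.
From mathcomp Require Import complex.
From mathcomp Require Import classical_sets reals sequences exp.
Set Implicit Arguments. Unset Strict Implicit. Unset Printing Implicit Defensive.
Import Order.TTheory GRing.Theory Num.Theory.
Local Open Scope ring_scope.
Local Open Scope sesquilinear_scope.

Section QDefs.
Variable R : realType.
Local Notation C := R[i].

Definition mxfun n (f : R -> R) (A : 'M[C]_n) : 'M[C]_n :=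
  invmx (spectralmx A)
  *m diag_mx (map_mx (fun z : C => (f (complex.Re z))%:C%C) (spectral_diag A))
  *m spectralmx A.

(* real part of the trace (expectation values / traces of Hermitian ops) *)
Definition rtr n (A : 'M[C]_n) : R := complex.Re (\tr A).

Definition mexp_neg n (gamma : R) (H : 'M[C]_n) : 'M[C]_n :=
  mxfun (fun x => expR (- (gamma * x))) H.
Definition gibbs n (gamma : R) (H : 'M[C]_n) : 'M[C]_n :=
  (\tr (mexp_neg gamma H))^-1 *: mexp_neg gamma H.

(* von Neumann entropy S(sigma) = - tr[sigma ln sigma]; ln 0 = 0 in
   mathcomp-analysis, so the convention 0 ln 0 = 0 holds *)
Definition SvN n (sigma : 'M[C]_n) : R := - rtr (sigma *m mxfun (@ln R) sigma).

Definition density n (rho : 'M[C]_n) : Prop :=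
  [/\ rho \is hermsymmx, \tr rho = 1 &
      forall v : 'rV[C]_n, 0 <= (v *m rho *m v ^t*) 0 0].

Definition coarse_graining n m (P : 'I_m -> 'M[C]_n) : Prop :=
  [/\ forall i, P i \is hermsymmx,
      forall i, P i *m P i = P i,
      forall i, P i != 0,
      forall i j, i != j -> P i *m P j = 0 &
      \sum_(i < m) P i = 1%:M].

(* min_U tr[H U A U^dagger] over unitaries (the minimum exists; we use the infimum) *)
Definition min_unitary n (H A : 'M[C]_n) : R :=
  inf [set x : R | exists U : 'M[C]_n, U \is unitarymx /\ x = rtr (H *m (U *m A *m U ^t*))].

Definition Vol n m (P : 'I_m -> 'M[C]_n) (i : 'I_m) : R := rtr (P i).
Definition prob n m (P : 'I_m -> 'M[C]_n) (rho : 'M[C]_n) (i : 'I_m) : R := rtr (P i *m rho).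

Definition rho_cg n m (P : 'I_m -> 'M[C]_n) (rho : 'M[C]_n) : 'M[C]_n :=
  \sum_(i < m) (prob P rho i / Vol P i)%:C%C *: P i.

Definition W_B n m (H : 'M[C]_n) (P : 'I_m -> 'M[C]_n) (rho : 'M[C]_n) : R :=
  rtr (H *m rho) - \sum_(i < m) prob P rho i * min_unitary H ((Vol P i)^-1%:C%C *: P i).

Definition W_obs n m (H : 'M[C]_n) (P : 'I_m -> 'M[C]_n) (rho : 'M[C]_n) : R :=
  rtr (H *m rho) - min_unitary H (rho_cg P rho).

Definition W_Binf n (H : 'M[C]_n) (beta : R) (rho : 'M[C]_n) : R :=
  rtr (H *m (rho - gibbs beta H)).
Definition W_inf n (H : 'M[C]_n) (beta' : R) (rho : 'M[C]_n) : R :=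
  rtr (H *m (rho - gibbs beta' H)).

End QDefs.

(* Main.v *)
Require Import Defs.
From mathcomp Require Import all_boot all_order all_algebra.
From mathcomp Require Import complex.
From mathcomp Require Import classical_sets reals sequences exp.
From mathcomp Require Import ring lra.
Import Order.TTheory GRing.Theory Num.Theory.
Local Open Scope ring_scope.
Local Open Scope sesquilinear_scope.
Set Implicit Arguments. Unset Strict Implicit. Unset Printing Implicit Defensive.

Section S.
Variable R : realType.
Local Notation C := R[i].

Lemma diag_fun_conj n (P W : 'M[C]_n) (e d : 'rV[C]_n) (F : C -> C) :
  P \in unitmx -> W \in unitmx ->
  invmx P *m diag_mx e *m P = invmx W *m diag_mx d *m W ->
  invmx P *m diag_mx (map_mx F e) *m P = invmx W *m diag_mx (map_mx F d) *m W.
Proof.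
move=> uP uW eq.
have key : diag_mx e *m (P *m invmx W) = (P *m invmx W) *m diag_mx d.
  have := congr1 (fun X => P *m X *m invmx W) eq.
  rewrite !mulmxA (mulmxV uP) mul1mx -!mulmxA (mulmxV uW) mulmx1.
  by rewrite !mulmxA.
have key' : diag_mx (map_mx F e) *m (P *m invmx W) = (P *m invmx W) *m diag_mx (map_mx F d).
  move: key; move: (P *m invmx W) => Q key.
  rewrite mul_diag_mx mul_mx_diag in key; rewrite mul_diag_mx mul_mx_diag.
  apply/matrixP => i j; move/matrixP: key => /(_ i j); rewrite !mxE => h.
  have [->|nz] := eqVneq (Q i j) 0; first by rewrite mulr0 mul0r.
  rewrite mulrC in h; have := mulfI nz h => ->; by rewrite mulrC.
have := congr1 (fun X => invmx P *m X *m W) key'.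
rewrite !mulmxA (mulVmx uP) mul1mx -!mulmxA (mulVmx uW) mulmx1.
by rewrite !mulmxA.
Qed.

Lemma mxfun_eq n (f : R -> R) (A W : 'M[C]_n) (d : 'rV[C]_n) :
  A \is normalmx -> W \in unitmx -> A = invmx W *m diag_mx d *m W ->
  mxfun f A = invmx W *m diag_mx (map_mx (fun z : C => (f (complex.Re z))%:C%C) d) *m W.
Proof.
move=> nA uW eA; apply: diag_fun_conj => //; first exact: spectral_unit.
by rewrite -eA; apply/esym/orthomx_spectralP.
Qed.
End S.

Section S.
Variable R : realType.
Local Notation C := R[i].

Lemma ctmul m n p (A : 'M[C]_(m,n)) (B : 'M[C]_(n,p)) : (A *m B)^t* = B^t* *m A^t*.
Proof. by rewrite trmx_mul map_mxM. Qed.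

Lemma ctK m n (A : 'M[C]_(m,n)) : A^t*^t* = A.
Proof. exact: trmxCK. Qed.

Lemma ct_delta m n (i : 'I_m) (j : 'I_n) : (delta_mx i j : 'M[C]_(m,n))^t* = delta_mx j i.
Proof.
apply/matrixP => a b; rewrite !mxE conjC_nat.
by rewrite andbC.
Qed.

Lemma diag_sum_rows n (W : 'M[C]_n) (d : 'rV[C]_n) :
  W^t* *m diag_mx d *m W = \sum_j d 0 j *: ((row j W)^t* *m row j W).
Proof.
rewrite diag_mx_sum_delta mulmx_sumr mulmx_suml; apply: eq_bigr => j _.
rewrite -scalemxAr -scalemxAl; congr (_ *: _).
rewrite rowE ctmul ct_delta -(mul_delta_mx (0 : 'I_1)).
by rewrite !mulmxA.
Qed.
End S.

Section S.
Variable R : realType.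

Lemma ent_ineq (a g : R) : 0 <= a -> 0 < g -> a - g <= a * ln a - a * ln g.
Proof.
move=> a0 g0; have [->|ap] := eqVneq a 0; first by rewrite !mul0r subrr sub0r oppr_le0 ltW.
have apos : 0 < a by rewrite lt_def ap a0.
rewrite -mulrBr -ln_div ?posrE //.
have h : ln (g / a) <= g / a - 1.
  have := @le_ln1Dx R (g / a - 1); rewrite addrCA subrr addr0; apply.
  by rewrite ltrBrDl subrr divr_gt0.
have : a * (g / a - 1) >= a * ln (g / a) by rewrite ler_wpM2l // ltW.
rewrite mulrBr mulr1 mulrCA divff ?mulr1 //.
by rewrite !ln_div ?posrE // !mulrBr; lra.
Qed.

Lemma klein_real (T : finType) (n : nat) (c : 'I_n -> T -> R) (a : T -> R) (S : pred T)
  (g : 'I_n -> R) :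
  (forall k t, 0 <= c k t) -> (forall t, 0 <= a t) -> (forall t, ~~ S t -> a t = 0) ->
  (forall k, 0 < g k) ->
  (forall t, S t -> \sum_k c k t = 1) -> (forall k, \sum_(t | S t) c k t = 1) ->
  \sum_t a t = 1 -> \sum_k g k = 1 ->
  \sum_t a t * \sum_k c k t * ln (g k) <= \sum_t a t * ln (a t).
Proof.
move=> hc ha hS hg hcol hrow ha1 hg1.
have e1 : \sum_t a t * ln (a t) = \sum_(t | S t) \sum_k c k t * (a t * ln (a t)).
  rewrite (bigID S) /= [X in _ + X]big1 ?addr0.
    by apply: eq_bigr => t St; rewrite -big_distrl /= hcol // mul1r.
  by move=> t nSt; rewrite hS // mul0r.
have e2 : \sum_t a t * \sum_k c k t * ln (g k) =
          \sum_(t | S t) \sum_k c k t * (a t * ln (g k)).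
  rewrite (bigID S) /= [X in _ + X]big1 ?addr0.
    apply: eq_bigr => t St; rewrite big_distrr /=; apply: eq_bigr => k _.
    by rewrite mulrCA.
  by move=> t nSt; rewrite hS // mul0r.
have e3 : \sum_(t | S t) \sum_k c k t * (a t - g k) = 0.
  transitivity (\sum_(t | S t) a t - \sum_(t | S t) \sum_k c k t * g k).
    rewrite -sumrB; apply: eq_bigr => t St.
    rewrite -{2}(mul1r (a t)) -(hcol t St) big_distrl /= -sumrB.
    by apply: eq_bigr => k _; rewrite mulrBr.
  rewrite exchange_big /=.
  under [X in _ - X]eq_bigr => k _ do rewrite -big_distrl /= hrow mul1r.
  have haS : \sum_(t | S t) a t = 1.
    rewrite -ha1 [in RHS](bigID S) /= [X in _ = _ + X]big1 ?addr0 //.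
  by rewrite haS hg1 subrr.
rewrite -subr_ge0 e1 e2 -sumrB; rewrite -[X in X <= _]e3; apply: ler_sum => t St.
rewrite -sumrB; apply: ler_sum => k _.
by rewrite -mulrBr ler_wpM2l // ent_ineq.
Qed.
End S.

Section S.
Variable R : realType.
Local Notation C := R[i].

Lemma ReMr (a : R) (z : C) : complex.Re (a%:C%C * z) = a * complex.Re z.
Proof. by case: z => x y /=; rewrite mul0r subr0. Qed.

Lemma Re_sum (I : Type) (r : seq I) (P : pred I) (F : I -> C) :
  complex.Re (\sum_(i <- r | P i) F i) = \sum_(i <- r | P i) complex.Re (F i).
Proof. exact: (raddf_sum (@complex.Re R)). Qed.

Lemma Re_ge0 (z : C) : 0 <= z -> 0 <= complex.Re z.
Proof. by rewrite lecE => /andP[_]. Qed.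

Lemma unit_ctV n (V : 'M[C]_n) : V \is unitarymx -> V^t* *m V = 1%:M.
Proof. by move=> uV; rewrite -invmx_unitary // mulVmx // unitarymx_unit. Qed.

Definition cw n (V : 'M[C]_n) (x : 'rV[C]_n) (k : 'I_n) : R :=
  complex.Re ((x *m V^t*) 0 k * Num.conj ((x *m V^t*) 0 k)).

Lemma cw_ge0 n (V : 'M[C]_n) x k : 0 <= cw V x k.
Proof. by apply: Re_ge0; rewrite mul_conjC_ge0. Qed.

Lemma entry_ct m (y : 'rV[C]_m) : (y *m y^t*) 0 0 = \sum_k y 0 k * Num.conj (y 0 k).
Proof. by rewrite !mxE; apply: eq_bigr => k _; rewrite !mxE. Qed.

Lemma cw_col n (V : 'M[C]_n) x : V \is unitarymx -> x *m x^t* = 1%:M -> \sum_k cw V x k = 1.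
Proof.
move=> uV hx; rewrite /cw -Re_sum -entry_ct ctmul ctK -mulmxA (mulmxA (V^t*)).
by rewrite unit_ctV // mul1mx hx mxE.
Qed.

Lemma cw_row (T : finType) n (V : 'M[C]_n) (x : T -> 'rV[C]_n) (S : pred T) k :
  V \is unitarymx -> \sum_(t | S t) (x t)^t* *m x t = 1%:M -> \sum_(t | S t) cw V (x t) k = 1.
Proof.
move=> uV hS.
have : (V *m (\sum_(t | S t) (x t)^t* *m x t) *m V^t*) k k = 1.
  by rewrite hS mulmx1 (unitarymxP uV) mxE eqxx.
rewrite mulmx_sumr mulmx_suml summxE => /(congr1 (@complex.Re R)).
rewrite Re_sum /= => <-; apply: eq_bigr => t _; rewrite /cw.
rewrite mulmxA -mulmxA -[V](ctK V) -ctmul ctK.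
rewrite !mxE big_ord1 !mxE mulrC; done.
Qed.

End S.

Section S.
Variable R : realType.
Local Notation C := R[i].

Lemma rtr_H_proj n (V : 'M[C]_n) (h : 'I_n -> R) (x : 'rV[C]_n) :
  rtr (V^t* *m diag_mx (\row_k (h k)%:C%C) *m V *m (x^t* *m x)) = \sum_k h k * cw V x k.
Proof.
rewrite /rtr mulmxA mxtrace_mulC trace_mx11 !mulmxA.
have -> : x *m V^t* *m diag_mx (\row_k (h k)%:C%C) *m V *m x^t* =
          (x *m V^t*) *m diag_mx (\row_k (h k)%:C%C) *m (x *m V^t*)^t*.
  by rewrite ctmul ctK !mulmxA.
rewrite /cw; move: (x *m V^t*) => y.
rewrite mxE Re_sum; apply: eq_bigr => k _.
rewrite mul_mx_diag !mxE -ReMr; congr complex.Re.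
by rewrite mulrAC mulrC.
Qed.

Lemma trZ n (c : C) (M : 'M[C]_n) : \tr (c *: M) = c * \tr M.
Proof. by rewrite /mxtrace mulr_sumr; apply: eq_bigr => i _; rewrite mxE. Qed.

Lemma tr_sum (T : finType) n (M : T -> 'M[C]_n) : \tr (\sum_t M t) = \sum_t \tr (M t).
Proof.
rewrite /mxtrace exchange_big /=; apply: eq_bigr => i _.
by rewrite summxE.
Qed.

Lemma rtr_sum (T : finType) n (A : 'M[C]_n) (a : T -> R) (X : T -> 'M[C]_n) :
  rtr (A *m \sum_t (a t)%:C%C *: X t) = \sum_t a t * rtr (A *m X t).
Proof.
rewrite /rtr mulmx_sumr tr_sum Re_sum; apply: eq_bigr => t _.
by rewrite -scalemxAr trZ ReMr.
Qed.
End S.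

Section S.
Variable R : realType.
Local Notation C := R[i].

Lemma sum_exp_gt0 n (f : 'I_n -> R) : (0 < n)%N -> 0 < \sum_k expR (f k).
Proof.
case: n f => // n f _; rewrite big_ord_recl /=.
by apply: ltr_pwDl; [exact: expR_gt0 | apply: sumr_ge0 => k _; exact: expR_ge0].
Qed.

Lemma klein_mx (T : finType) n (V : 'M[C]_n) (h : 'I_n -> R) (beta : R)
  (x : T -> 'rV[C]_n) (a : T -> R) (S : pred T) :
  (0 < n)%N -> V \is unitarymx -> (forall t, 0 <= a t) -> (forall t, ~~ S t -> a t = 0) ->
  (forall t, S t -> x t *m (x t)^t* = 1%:M) -> \sum_(t | S t) (x t)^t* *m x t = 1%:M ->
  \sum_t a t = 1 ->
  - ln (\sum_k expR (- (beta * h k))) <=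
   beta * rtr (V^t* *m diag_mx (\row_k (h k)%:C%C) *m V *m
               \sum_t (a t)%:C%C *: ((x t)^t* *m x t)) + \sum_t a t * ln (a t).
Proof.
move=> n0 uV ha hS hx hsum ha1.
set Z := \sum_k expR (- (beta * h k)).
have Zpos : 0 < Z by exact: sum_exp_gt0.
pose g k := expR (- (beta * h k)) / Z.
have lng : forall k, ln (g k) = - (beta * h k) - ln Z.
  by move=> k; rewrite ln_div ?posrE ?expR_gt0 // expRK.
have eterm : forall t, a t * \sum_k cw V (x t) k * ln (g k) =
    - beta * (a t * \sum_k h k * cw V (x t) k) - a t * ln Z.
  move=> t; have [St|nSt] := boolP (S t); last by rewrite hS // !mul0r mulr0 subr0.
  under eq_bigr => k _ do rewrite lng mulrBr.
  rewrite sumrB -big_distrl /= cw_col ?hx // mul1r.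
  have -> : \sum_k cw V (x t) k * - (beta * h k) = - beta * \sum_k h k * cw V (x t) k.
    by rewrite mulr_sumr; apply: eq_bigr => k _; ring.
  ring.
have := @klein_real R T n (fun k t => cw V (x t) k) a S g (fun k t => cw_ge0 V (x t) k)
  ha hS.
have gpos : forall k, 0 < g k by move=> k; rewrite divr_gt0 // expR_gt0.
move=> /(_ gpos (fun t St => cw_col uV (hx t St)) (fun k => cw_row k uV hsum) ha1).
have -> : \sum_k g k = 1 by rewrite -mulr_suml divff // gt_eqF.
move=> /(_ erefl).
rewrite (eq_bigr _ (fun t _ => eterm t)) sumrB -mulr_sumr -mulr_suml ha1 mul1r.
rewrite rtr_sum => hk; rewrite mulNr in hk.
have -> : \sum_t a t * rtr (V^t* *m diag_mx (\row_k (h k)%:C%C) *m V *m ((x t)^t* *m x t)) =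
  \sum_t a t * \sum_k h k * cw V (x t) k.
  by apply: eq_bigr => t _; congr (_ * _); exact: rtr_H_proj.
lra.
Qed.
End S.

Section S.
Variable R : realType.
Local Notation C := R[i].

Lemma real_Re (z : C) : z \is Num.real -> (complex.Re z)%:C%C = z.
Proof.
case: z => a b; rewrite realE !lecE /= => /orP[/andP[/eqP h _]|/andP[/eqP h _]]; [by rewrite h | by rewrite -h].
Qed.

Lemma diag_rowM n (u w : 'I_n -> R) :
  diag_mx (\row_k (u k)%:C%C) *m diag_mx (\row_k (w k)%:C%C) = diag_mx (\row_k (u k * w k)%:C%C) :> 'M[C]_n.
Proof.
rewrite mul_diag_mx; apply/matrixP => i j; rewrite !mxE.
by case: eqP => [->|]; rewrite ?mulr0 ?mulr1n ?mulr0n // rmorphM.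
Qed.

Lemma rtr_conj_diag n (V : 'M[C]_n) (u : 'I_n -> R) : V \is unitarymx ->
  rtr (V^t* *m diag_mx (\row_k (u k)%:C%C) *m V) = \sum_k u k.
Proof.
move=> uV; rewrite /rtr mxtrace_mulC mulmxA (unitarymxP uV) mul1mx mxtrace_diag Re_sum.
by apply: eq_bigr => k _; rewrite mxE.
Qed.

Lemma conj_diagM n (V : 'M[C]_n) (u w : 'I_n -> R) : V \is unitarymx ->
  V^t* *m diag_mx (\row_k (u k)%:C%C) *m V *m (V^t* *m diag_mx (\row_k (w k)%:C%C) *m V) =
  V^t* *m diag_mx (\row_k (u k * w k)%:C%C) *m V.
Proof.
move=> uV; rewrite !mulmxA -(mulmxA _ V) (unitarymxP uV) mulmx1 -(mulmxA _ (diag_mx _)).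
by rewrite mulmxA -(mulmxA (V^t*)) diag_rowM.
Qed.

Lemma normal_conj_diag n (V : 'M[C]_n) (d : 'rV[C]_n) : V \is unitarymx ->
  V^t* *m diag_mx d *m V \is normalmx.
Proof.
move=> uV; apply/orthomx_spectral_subproof; exists (V, d) => //=.
by rewrite invmx_unitary.
Qed.

Lemma SvN_diag n (V : 'M[C]_n) (u : 'I_n -> R) : V \is unitarymx ->
  SvN (V^t* *m diag_mx (\row_k (u k)%:C%C) *m V) = - \sum_k u k * ln (u k).
Proof.
move=> uV; rewrite /SvN (@mxfun_eq R n (@ln R) _ V (\row_k (u k)%:C%C)).
- have -> : map_mx (fun z : C => (ln (complex.Re z))%:C%C) (\row_k (u k)%:C%C) =
            \row_k (ln (u k))%:C%C.
    by apply/matrixP => i j; rewrite !mxE.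
  by rewrite invmx_unitary // conj_diagM // rtr_conj_diag.
- exact: normal_conj_diag.
- exact: unitarymx_unit.
- by rewrite invmx_unitary.
Qed.
End S.

Section S.
Variable R : realType.
Local Notation C := R[i].

Definition hval n (H : 'M[C]_n) k := complex.Re (spectral_diag H 0 k).
Definition Zf n (beta : R) (H : 'M[C]_n) := \sum_k expR (- (beta * hval H k)).
Definition gval n (beta : R) (H : 'M[C]_n) k := expR (- (beta * hval H k)) / Zf beta H.

Lemma H_decomp n (H : 'M[C]_n) : H \is hermsymmx ->
  H = (spectralmx H)^t* *m diag_mx (\row_k (hval H k)%:C%C) *m spectralmx H.
Proof.
move=> hH; have := orthomx_spectralP (hermitian_normalmx hH) => {1}->.
have /mxOverP hr := hermitian_spectral_diag_real hH.
have -> : spectral_diag H = \row_k (hval H k)%:C%C.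
  by apply/matrixP => i k; rewrite !mxE !ord1 /hval real_Re // hr.
by rewrite invmx_unitary ?spectral_unitarymx.
Qed.

Lemma gibbs_decomp n (beta : R) (H : 'M[C]_n) : H \is hermsymmx ->
  gibbs beta H = (spectralmx H)^t* *m diag_mx (\row_k (gval beta H k)%:C%C) *m spectralmx H.
Proof.
move=> hH; set V := spectralmx H.
have uV : V \is unitarymx by exact: spectral_unitarymx.
have eH := H_decomp hH.
have em : mexp_neg beta H = V^t* *m diag_mx (\row_k (expR (- (beta * hval H k)))%:C%C) *m V.
  rewrite /mexp_neg (@mxfun_eq R n _ H V (\row_k (hval H k)%:C%C)).
  - have -> : map_mx (fun z : C => (expR (- (beta * complex.Re z)))%:C%C)
        (\row_k (hval H k)%:C%C) = \row_k (expR (- (beta * hval H k)))%:C%C.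
      by apply/matrixP => i k; rewrite !mxE.
    by rewrite invmx_unitary.
  - exact: hermitian_normalmx.
  - exact: unitarymx_unit.
  - by rewrite invmx_unitary.
have etr : \tr (mexp_neg beta H) = (Zf beta H)%:C%C.
  rewrite em mxtrace_mulC mulmxA (unitarymxP uV) mul1mx mxtrace_diag /Zf rmorph_sum.
  by apply: eq_bigr => k _; rewrite mxE.
rewrite /gibbs etr em scalemxAl scalemxAr.
have -> : ((Zf beta H)%:C%C)^-1 *: diag_mx (\row_k (expR (- (beta * hval H k)))%:C%C) =
   diag_mx (\row_k (gval beta H k)%:C%C).
  apply/matrixP => i j; rewrite !mxE.
  case: eqP => [->|]; rewrite ?mulr0n ?mulr1n ?mulr0 //.
  by rewrite /gval mulrC -fmorphV -rmorphM.
by [].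
Qed.

Lemma Egibbs n (beta : R) (H : 'M[C]_n) : H \is hermsymmx ->
  rtr (H *m gibbs beta H) = \sum_k hval H k * gval beta H k.
Proof.
move=> hH; rewrite {1}(H_decomp hH) gibbs_decomp // conj_diagM ?spectral_unitarymx //.
by rewrite rtr_conj_diag ?spectral_unitarymx.
Qed.

Lemma Sgibbs n (beta : R) (H : 'M[C]_n) : (0 < n)%N -> H \is hermsymmx ->
  SvN (gibbs beta H) = beta * rtr (H *m gibbs beta H) + ln (Zf beta H).
Proof.
move=> n0 hH; have Zp : 0 < Zf beta H by exact: sum_exp_gt0.
rewrite Egibbs // gibbs_decomp // SvN_diag ?spectral_unitarymx //.
have lng : forall k, ln (gval beta H k) = - (beta * hval H k) - ln (Zf beta H).
  by move=> k; rewrite /gval ln_div ?posrE ?expR_gt0 // expRK.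
have g1 : \sum_k gval beta H k = 1 by rewrite /gval -mulr_suml divff // gt_eqF.
under eq_bigr => k _ do rewrite lng mulrBr.
rewrite sumrB -big_distrl /= g1 mul1r mulr_sumr opprB -sumrN.
rewrite addrC; congr (_ + _); apply: eq_bigr => k _; ring.
Qed.

Lemma VP (T : finType) n (beta : R) (H : 'M[C]_n)
  (x : T -> 'rV[C]_n) (a : T -> R) (S : pred T) :
  (0 < n)%N -> H \is hermsymmx -> (forall t, 0 <= a t) -> (forall t, ~~ S t -> a t = 0) ->
  (forall t, S t -> x t *m (x t)^t* = 1%:M) -> \sum_(t | S t) (x t)^t* *m x t = 1%:M ->
  \sum_t a t = 1 ->
  beta * rtr (H *m gibbs beta H) - SvN (gibbs beta H) <=
   beta * rtr (H *m \sum_t (a t)%:C%C *: ((x t)^t* *m x t)) + \sum_t a t * ln (a t).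
Proof.
move=> n0 hH ha hS hx hsum ha1.
have := @klein_mx R T n (spectralmx H) (hval H) beta x a S n0 (spectral_unitarymx H) ha hS hx hsum ha1.
rewrite -(H_decomp hH) Sgibbs // -/(Zf beta H).
set E := rtr _; set L := ln _; lra.
Qed.
End S.

Section S.
Variable R : realType.
Local Notation C := R[i].

Lemma conjK n (V A : 'M[C]_n) : V \is unitarymx -> V *m (V^t* *m A *m V) *m V^t* = A.
Proof. by move=> uV; rewrite !mulmxA (unitarymxP uV) mul1mx -mulmxA (unitarymxP uV) mulmx1. Qed.

Lemma proj_d01 n (Pm : 'M[C]_n) j : Pm \is hermsymmx -> Pm *m Pm = Pm ->
  spectral_diag Pm 0 j = ((spectral_diag Pm 0 j == 1) : nat)%:R.
Proof.
move=> hP idP; set V := spectralmx Pm; set d := spectral_diag Pm.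
have uV : V \is unitarymx by exact: spectral_unitarymx.
have eP : Pm = V^t* *m diag_mx d *m V.
  by rewrite -invmx_unitary //; apply/orthomx_spectralP/hermitian_normalmx.
have eD : diag_mx d = V *m Pm *m V^t* by rewrite eP conjK.
have DD : diag_mx d *m diag_mx d = diag_mx d.
  rewrite eD.
  have -> : V *m Pm *m V^t* *m (V *m Pm *m V^t*) = V *m (Pm *m (V^t* *m V) *m Pm) *m V^t*.
    by rewrite !mulmxA.
  by rewrite unit_ctV // mulmx1 idP.
move/matrixP: DD => /(_ j j).
rewrite mul_diag_mx !mxE eqxx mulr1n => h.
have [->|h1] := eqVneq (d 0 j) 1; first by [].
have : d 0 j * (d 0 j - 1) = 0 by rewrite mulrBr mulr1 h subrr.
move/eqP; rewrite mulf_eq0 subr_eq0 (negPf h1) orbF => /eqP ->; done.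
Qed.

End S.

Section S.
Variable R : realType.
Local Notation C := R[i].

Lemma proj_eP n (Pm : 'M[C]_n) : Pm \is hermsymmx ->
  Pm = (spectralmx Pm)^t* *m diag_mx (spectral_diag Pm) *m spectralmx Pm.
Proof.
move=> hP; rewrite -invmx_unitary ?spectral_unitarymx //.
by apply/orthomx_spectralP/hermitian_normalmx.
Qed.

Lemma proj_decomp n (Pm : 'M[C]_n) : Pm \is hermsymmx -> Pm *m Pm = Pm ->
  Pm = \sum_(j | spectral_diag Pm 0 j == 1)
          (row j (spectralmx Pm))^t* *m row j (spectralmx Pm).
Proof.
move=> hP idP; rewrite {1}(proj_eP hP) diag_sum_rows.
rewrite (bigID (fun j => spectral_diag Pm 0 j == 1)) /= [X in _ + X]big1 ?addr0.
  by apply: eq_bigr => j /eqP ->; rewrite scale1r.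
by move=> j /negPf h; rewrite proj_d01 // h scale0r.
Qed.

Lemma proj_tr n (Pm : 'M[C]_n) : Pm \is hermsymmx -> Pm *m Pm = Pm ->
  rtr Pm = \sum_j ((spectral_diag Pm 0 j == 1) : nat)%:R.
Proof.
move=> hP idP.
have ed : spectral_diag Pm = \row_k (((spectral_diag Pm 0 k == 1) : nat)%:R : R)%:C%C.
  by apply/matrixP => i k; rewrite !ord1 mxE rmorph_nat -proj_d01.
by rewrite {1}(proj_eP hP) {1}ed rtr_conj_diag ?spectral_unitarymx.
Qed.

End S.

Section S.
Variable R : realType.
Local Notation C := R[i].

Lemma tr_sumP (T : finType) (S : pred T) n (M : T -> 'M[C]_n) :
  \tr (\sum_(t | S t) M t) = \sum_(t | S t) \tr (M t).
Proof.
rewrite big_mkcond tr_sum [RHS]big_mkcond; apply: eq_bigr => t _.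
by case: (S t) => //; rewrite mxtrace0.
Qed.

Lemma Vol_pos n m (P : 'I_m -> 'M[C]_n) i : coarse_graining P -> 0 < Vol P i.
Proof.
case=> hP idP nzP _ _; rewrite /Vol proj_tr //.
rewrite lt_def sumr_ge0 ?andbT; last by move=> j _; rewrite ler0n.
apply/negP => /eqP /psumr_eq0P h.
have : P i = 0.
  rewrite (proj_decomp (hP i) (idP i)) big1 // => j sj.
  by move: (h (fun k _ => ler0n _ _) j isT); rewrite sj /= => /eqP; rewrite oner_eq0.
by apply/eqP; rewrite nzP.
Qed.

Lemma prob_ge0 n m (P : 'I_m -> 'M[C]_n) rho i : coarse_graining P -> density rho ->
  0 <= prob P rho i.
Proof.
case=> hP idP _ _ _ [_ _ hpos]; rewrite /prob /rtr (proj_decomp (hP i) (idP i)).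
rewrite mulmx_suml tr_sumP Re_sum sumr_ge0 // => j _.
rewrite -mulmxA mxtrace_mulC trace_mx11; apply: Re_ge0; exact: hpos.
Qed.

Lemma prob_sum1 n m (P : 'I_m -> 'M[C]_n) rho : coarse_graining P -> density rho ->
  \sum_i prob P rho i = 1.
Proof.
case=> _ _ _ _ hsum [_ htr _]; rewrite /prob /rtr -Re_sum -tr_sum -mulmx_suml hsum mul1mx htr.
by [].
Qed.

End S.

Lemma sum_pair (V : nmodType) (I J : finType) (F : I * J -> V) :
  \sum_t F t = \sum_i \sum_j F (i, j).
Proof. by rewrite pair_big /=; apply: eq_bigr => [[i j]]. Qed.

Lemma sum_pairP (V : nmodType) (I J : finType) (S : I -> J -> bool) (F : I * J -> V) :
  \sum_(t | S t.1 t.2) F t = \sum_i \sum_(j | S i j) F (i, j).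
Proof.
rewrite big_mkcond sum_pair; apply: eq_bigr => i _.
by rewrite [RHS]big_mkcond.
Qed.

Section S.
Variable R : realType.
Local Notation C := R[i].

Lemma row_unit n (V : 'M[C]_n) j : V \is unitarymx -> row j V *m (row j V)^t* = 1%:M.
Proof.
move=> uV; have := (row_unitarymxP uV) j j; rewrite dotmxE eqxx => h.
by apply/matrixP => a b; rewrite !ord1 h !mxE.
Qed.

End S.

Section S.
Variable R : realType.
Local Notation C := R[i].

Lemma sigma_bound n m (H : 'M[C]_n) (P : 'I_m -> 'M[C]_n) (U : 'M[C]_n) (w : 'I_m -> R)
  (beta : R) :
  (0 < n)%N -> H \is hermsymmx -> coarse_graining P -> U \is unitarymx ->
  (forall i, 0 <= w i) -> \sum_i w i = 1 ->
  beta * rtr (H *m gibbs beta H) - SvN (gibbs beta H) <=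
  beta * rtr (H *m (U *m (\sum_i (w i / Vol P i)%:C%C *: P i) *m U^t*))
   + \sum_i w i * ln (w i / Vol P i).
Proof.
move=> n0 hH cg uU hw hw1.
have Vp := fun i => Vol_pos i cg.
have cg' := cg; case: cg' => hP idP _ _ hsum.
pose s i j := spectral_diag (P i) 0 j == 1.
pose x (t : 'I_m * 'I_n) := row t.2 (spectralmx (P t.1)) *m U^t*.
pose a (t : 'I_m * 'I_n) := if s t.1 t.2 then w t.1 / Vol P t.1 else 0.
have hVol : forall i, Vol P i = \sum_j (s i j : nat)%:R by move=> i; rewrite /Vol proj_tr.
have ha : forall t, 0 <= a t.
  by move=> t; rewrite /a; case: ifP => // _; rewrite divr_ge0 // ltW.
have hS : forall t, ~~ s t.1 t.2 -> a t = 0 by move=> t /negPf h; rewrite /a h.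
have hx : forall t, s t.1 t.2 -> x t *m (x t)^t* = 1%:M.
  move=> t _; rewrite /x ctmul ctK mulmxA -(mulmxA _ (U^t*)) unit_ctV // mulmx1.
  exact/row_unit/spectral_unitarymx.
have hxx : forall t, (x t)^t* *m x t =
    U *m ((row t.2 (spectralmx (P t.1)))^t* *m row t.2 (spectralmx (P t.1))) *m U^t*.
  by move=> t; rewrite /x ctmul ctK !mulmxA.
have hsumx : \sum_(t | s t.1 t.2) (x t)^t* *m x t = 1%:M.
  rewrite (sum_pairP s (fun t => (x t)^t* *m x t)) /=.
  under eq_bigr => i _ do under eq_bigr => j _ do rewrite hxx /=.
  under eq_bigr => i _ do rewrite -mulmx_suml -mulmx_sumr -(proj_decomp (hP i) (idP i)).
  by rewrite -mulmx_suml -mulmx_sumr hsum mulmx1 (unitarymxP uU).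
have ha1 : \sum_t a t = 1.
  rewrite sum_pair -hw1; apply: eq_bigr => i _.
  rewrite (eq_bigr (fun j => (s i j : nat)%:R * (w i / Vol P i))); last first.
    by move=> j _; rewrite /a /=; case: (s i j); rewrite ?mul1r ?mul0r.
  by rewrite -mulr_suml -hVol mulrCA mulfV ?mulr1 // gt_eqF.
have := VP beta n0 hH ha hS hx hsumx ha1.
have esig : U *m (\sum_i (w i / Vol P i)%:C%C *: P i) *m U^t* =
    \sum_t (a t)%:C%C *: ((x t)^t* *m x t).
  rewrite sum_pair mulmx_sumr mulmx_suml; apply: eq_bigr => i _.
  rewrite {1}(proj_decomp (hP i) (idP i)) scaler_sumr mulmx_sumr mulmx_suml.
  rewrite [RHS](bigID (s i)) /= [X in _ = _ + X]big1 ?addr0.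
    by apply: eq_bigr => j sj; rewrite hxx /a /= (_ : s i j = true) // -scalemxAr -scalemxAl.
  by move=> j nsj; rewrite /a /= (negPf nsj) scale0r.
have eent : \sum_t a t * ln (a t) = \sum_i w i * ln (w i / Vol P i).
  rewrite sum_pair; apply: eq_bigr => i _.
  rewrite (eq_bigr (fun j => (s i j : nat)%:R * (w i / Vol P i * ln (w i / Vol P i))));
    last by move=> j _; rewrite /a /=; case: (s i j); rewrite ?mul1r ?mul0r.
  by rewrite -mulr_suml -hVol mulrA mulrCA mulfV ?mulr1 // gt_eqF.
by rewrite esig eent.
Qed.
End S.

Section S.
Variable R : realType.
Local Notation C := R[i].

Lemma rtrB n (A B : 'M[C]_n) : rtr (A - B) = rtr A - rtr B.
Proof. by rewrite /rtr !raddfB. Qed.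

Lemma SvN_gibbs n (beta' : R) (H : 'M[C]_n) : H \is hermsymmx ->
 SvN (gibbs beta' H) = - \sum_k gval beta' H k * ln (gval beta' H k).
Proof.
move=> hH; rewrite (gibbs_decomp beta' hH); apply: SvN_diag; exact: spectral_unitarymx.
Qed.

Lemma gibbs_cmp n (beta beta' : R) (H : 'M[C]_n) : (0 < n)%N -> H \is hermsymmx ->
  beta * rtr (H *m gibbs beta H) - SvN (gibbs beta H) <=
  beta * rtr (H *m gibbs beta' H) - SvN (gibbs beta' H).
Proof.
move=> n0 hH; set V := spectralmx H.
have uV : V \is unitarymx by exact: spectral_unitarymx.
have Zp : 0 < Zf beta' H by exact: sum_exp_gt0.
have gp : forall k, 0 <= gval beta' H k by move=> k; rewrite /gval divr_ge0 ?expR_ge0 // ltW.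
have g1 : \sum_k gval beta' H k = 1 by rewrite /gval -mulr_suml divff // gt_eqF.
have hsum : \sum_(k | predT k) (row k V)^t* *m row k V = 1%:M.
  have := diag_sum_rows V (const_mx 1); rewrite diag_const_mx mulmx1 unit_ctV // => ->.
  by apply: eq_bigr => k _; rewrite mxE scale1r.
have hS : forall k : 'I_n, ~~ predT k -> gval beta' H k = 0 by [].
have := @VP R 'I_n n beta H (fun k => row k V) (gval beta' H) predT n0 hH gp
  hS (fun k _ => row_unit k uV) hsum g1.
have eg : gibbs beta' H = \sum_k (gval beta' H k)%:C%C *: ((row k V)^t* *m row k V).
  rewrite gibbs_decomp // diag_sum_rows; apply: eq_bigr => k _; by rewrite mxE.
rewrite -eg => hV.
have aux : forall u v w z : R, u <= v + w -> z = - w -> u <= v - z.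
  by move=> u v w z h ->; rewrite opprK.
exact: (aux _ _ _ _ hV (SvN_gibbs beta' hH)).
Qed.

End S.

Section S.
Local Open Scope classical_set_scope.
Variable R : realType.
Local Notation C := R[i].

Lemma unitary1 n : (1%:M : 'M[C]_n) \is unitarymx.
Proof. by apply/unitarymxP; rewrite trmx1 map_mx1 mulmx1. Qed.

Lemma min_lb n (H A : 'M[C]_n) (L : R) :
  (forall U, U \is unitarymx -> L <= rtr (H *m (U *m A *m U^t*))) ->
  L <= min_unitary H A /\
  (forall U, U \is unitarymx -> min_unitary H A <= rtr (H *m (U *m A *m U^t*))).
Proof.
move=> hL; split.
  apply: lb_le_inf.
    by exists (rtr (H *m (1%:M *m A *m (1%:M)^t*))), 1%:M; split => //; exact: unitary1.
  by move=> y [U [uU ->]]; exact: hL.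
move=> U uU; apply: ge_inf.
  by exists L => y [V [uV ->]]; exact: hL.
by exists U.
Qed.

End S.

Section S.
Variable R : realType.
Local Notation C := R[i].

Lemma arith_lb (b E S y l : R) : 0 < b -> b * E - S <= b * y - l -> E + (l - S) / b <= y.
Proof.
move=> bp h; rewrite -lerBrDl ler_pdivrMr // mulrBl [y * b]mulrC [E * b]mulrC; lra.
Qed.

Lemma arith_cmp (b E E' S S' X Y : R) : 0 < b -> b * E - S <= b * E' - S' ->
  S = X -> S' = - Y + X -> Y <= 0 -> E <= E'.
Proof.
move=> bp h eS eS' hY; rewrite -subr_ge0 -(pmulr_rge0 _ bp) mulrBr; lra.
Qed.

Lemma arith_c (b E S y Z A B : R) : 0 < b -> b * E - S <= b * y + Z ->
  Z = A - B -> S = - A + B -> E <= y.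
Proof.
move=> bp h eZ eS; rewrite -subr_ge0 -(pmulr_rge0 _ bp) mulrBr; lra.
Qed.

Lemma delta_sum n m (P : 'I_m -> 'M[C]_n) i :
  \sum_j ((((j == i) : nat)%:R / Vol P j)%:C%C *: P j) = ((Vol P i)^-1)%:C%C *: P i.
Proof.
rewrite (bigD1 i) //= big1 ?addr0; first by rewrite eqxx mul1r.
by move=> j /negPf ->; rewrite mul0r scale0r.
Qed.

Lemma delta_ent m (V : 'I_m -> R) i : (forall j, 0 < V j) ->
  \sum_j ((j == i) : nat)%:R * ln (((j == i) : nat)%:R / V j) = - ln (V i).
Proof.
move=> Vp; rewrite (bigD1 i) //= big1 ?addr0; first by rewrite eqxx !mul1r lnV ?posrE.
by move=> j /negPf ->; rewrite mul0r.
Qed.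

Lemma ent_split m (p V : 'I_m -> R) : (forall j, 0 <= p j) -> (forall j, 0 < V j) ->
  \sum_j p j * ln (p j / V j) = \sum_j p j * ln (p j) - \sum_j p j * ln (V j).
Proof.
move=> hp Vp; rewrite -sumrB; apply: eq_bigr => j _.
have [->|pn] := eqVneq (p j) 0; first by rewrite !mul0r subrr.
have pp : 0 < p j by rewrite lt_def pn hp.
by rewrite ln_div ?posrE // mulrBr.
Qed.

Lemma plnp_le0 m (p : 'I_m -> R) : (forall j, 0 <= p j) -> \sum_j p j = 1 ->
  \sum_j p j * ln (p j) <= 0.
Proof.
move=> hp hp1; apply: sumr_le0 => j _; apply: mulr_ge0_le0 => //; apply: ln_le0.
rewrite -hp1 (bigD1 j) //= lerDl; exact: sumr_ge0.
Qed.

End S.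

Lemma final_arith (R : realType) (Hr mc spm Eb Eb' wobs wb wbinf winf : R) :
  wobs = Hr - mc -> wb = Hr - spm -> wbinf = Hr - Eb -> winf = Hr - Eb' ->
  spm <= mc -> Eb <= spm -> Eb' <= mc -> Eb <= Eb' ->
  (wobs <= wb /\ wb <= wbinf) /\ (wobs <= winf /\ winf <= wbinf).
Proof. move=> -> -> -> -> *; split; split; lra. Qed.

Lemma Wx_eq (R : realType) n (H rho G : 'M[R[i]]_n) :
  rtr (H *m (rho - G)) = rtr (H *m rho) - rtr (H *m G).
Proof. by rewrite mulmxBr rtrB. Qed.

Lemma sum_L (R : realType) m (p l : 'I_m -> R) (E S b : R) : \sum_i p i = 1 ->
  \sum_i p i * (E + (l i - S) / b) = E + (\sum_i p i * l i - S) / b.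
Proof.
move=> hp1; under eq_bigr => i _ do rewrite mulrDr mulrA mulrBr.
rewrite big_split /= -mulr_suml hp1 mul1r -mulr_suml sumrB -mulr_suml hp1 mul1r.
by [].
Qed.

Lemma lin_cg (R : realType) n m (P : 'I_m -> 'M[R[i]]_n) (rho U : 'M[R[i]]_n) :
  U *m rho_cg P rho *m U^t* =
  \sum_i (prob P rho i)%:C%C *: (U *m (((Vol P i)^-1)%:C%C *: P i) *m U^t*).
Proof.
rewrite /rho_cg mulmx_sumr mulmx_suml; apply: eq_bigr => i _.
by rewrite rmorphM -scalerA -!scalemxAr -!scalemxAl.
Qed.

Theorem mainTheorem10 (R : realType) (n m : nat) (H : 'M[R[i]]_n)
  (P : 'I_m -> 'M[R[i]]_n) (rho : 'M[R[i]]_n) (beta beta' : R) :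
  H \is hermsymmx ->
  coarse_graining P ->
  density rho ->
  0 < beta ->
  0 < beta' ->
  SvN (gibbs beta H) = \sum_(i < m) prob P rho i * ln (Vol P i) ->
  SvN (gibbs beta' H) =
    - (\sum_(i < m) prob P rho i * ln (prob P rho i))
    + \sum_(i < m) prob P rho i * ln (Vol P i) ->
  (W_obs H P rho <= W_B H P rho /\ W_B H P rho <= W_Binf H beta rho) /\
  (W_obs H P rho <= W_inf H beta' rho /\ W_inf H beta' rho <= W_Binf H beta rho).
Proof.
move=> hH cg dens bp bp' hS1 hS2.
have htr : \tr rho = 1 by case: dens.
have n0 : (0 < n)%N.
  rewrite lt0n; apply/eqP => n0'; move: htr; rewrite /mxtrace big1.
    by move/eqP; rewrite eq_sym oner_eq0.
  by move=> [i hi] _; exfalso; move: (hi); rewrite n0'.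
have hp0 : forall i, 0 <= prob P rho i := fun i => prob_ge0 i cg dens.
have hp1 : \sum_i prob P rho i = 1 := prob_sum1 cg dens.
have Vp : forall i, 0 < Vol P i := fun i => Vol_pos i cg.
pose L i := rtr (H *m gibbs beta H) + (ln (Vol P i) - SvN (gibbs beta H)) / beta.
have lowB : forall i U, U \is unitarymx ->
    L i <= rtr (H *m (U *m (((Vol P i)^-1)%:C%C *: P i) *m U^t*)).
  move=> i U uU.
  have hw : forall j : 'I_m, 0 <= ((j == i) : nat)%:R :> R by move=> j; exact: ler0n.
  have hw1 : \sum_j ((j == i) : nat)%:R = 1 :> R.
    rewrite (bigD1 i) //= eqxx big1 ?addr0 //.
    by move=> j /negPf ->.
  have h := @sigma_bound R n m H P U (fun j => ((j == i) : nat)%:R) beta n0 hH cg uU hw hw1.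
  rewrite /= delta_sum delta_ent // in h.
  exact: arith_lb bp h.
have lowC : forall U, U \is unitarymx ->
    rtr (H *m gibbs beta' H) <= rtr (H *m (U *m rho_cg P rho *m U^t*)).
  move=> U uU; have h := @sigma_bound R n m H P U (prob P rho) beta' n0 hH cg uU hp0 hp1.
  exact: (arith_c bp' h (ent_split hp0 Vp) hS2).
have mi := fun i => min_lb (lowB i).
have Fa : \sum_i prob P rho i * min_unitary H (((Vol P i)^-1)%:C%C *: P i) <=
          min_unitary H (rho_cg P rho).
  apply: (min_lb _).1 => U uU.
  rewrite lin_cg rtr_sum; apply: ler_sum => i _.
  apply: ler_wpM2l; [exact: hp0 | exact: (mi i).2].
have Fb : rtr (H *m gibbs beta H) <=
          \sum_i prob P rho i * min_unitary H (((Vol P i)^-1)%:C%C *: P i).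
  apply: le_trans (_ : \sum_i prob P rho i * L i <= _).
    rewrite /L sum_L // hS1 subrr mul0r addr0; exact: lexx.
  apply: ler_sum => i _; apply: ler_wpM2l; [exact: hp0 | exact: (mi i).1].
have Fc := (min_lb lowC).1.
have Fd := arith_cmp bp (gibbs_cmp beta beta' n0 hH) hS1 hS2 (plnp_le0 hp0 hp1).
exact: (final_arith erefl erefl (Wx_eq H rho (gibbs beta H)) (Wx_eq H rho (gibbs beta' H))
  Fa Fb Fc Fd).
Qed.
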